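(* Let $\beta>0$. Then there is no $\lambda\in\mathbb{C}$ with $\operatorname{Re}\lambda>-1$ and $\lambda\notin\{0,1\}$ for which there exists $0\ne\phi\in C^\infty[-1,1]$ solving \[ \Big(\lambda^2+\lambda-\frac{2\lambda(1+\beta)}{1+\beta+y(1-\beta)}\Big)\phi+\Big(2\lambda y+2y-\frac{2(1+\beta)y}{1+\beta+y(1-\beta)}-\frac{2(1-\beta)}{1+\beta+y(1-\beta)}\Big)\phi'+(y^2-1)\phi''=0. \] As a result, $U_{1,\beta,\kappa}$ is mode-stable for all $\beta>0$, $\kappa\in\mathbb{R}$.
   Context: $U_{1,\beta,\kappa}(s,y)=s-\log\big((1+y)+\beta(1-y)\big)+\log(1+\beta)+\kappa$ is a generalized self-similar solution of $\partial_{tt}u-\partial_{xx}u=(\partial_tu)^2-(\partial_xu)^2$ in self-similar variables $s=-\ln(T-t)$, $y=\frac{x-x_0}{T-t}$. The eigenvalues of its linearised operator $\mathbf{L}^2_{1,\beta}$ are the $\lambda\in\mathbb{C}$ for which the displayed ODE has a nonzero $C^\infty[-1,1]$ solution; mode-stable means every such eigenvalue has negative real part or equals $0$ or $1$. *)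

(* Defs.v *)
From Stdlib Require Import Reals.
From Coquelicot Require Import Coquelicot.
Open Scope R_scope.

Definition denom (beta y : R) : R := 1 + beta + y * (1 - beta).

(* d is a tower of derivatives of phi : R -> C on the real line:
   d 0 = phi and d (n+1) is the derivative of d n everywhere.
   Hence phi is C^infinity, d 1 = phi', d 2 = phi''. *)
Definition derivative_tower (phi : R -> C) (d : nat -> R -> C) : Prop :=
  (forall x, d 0%nat x = phi x) /\
  (forall (n : nat) (x : R), is_derive (d n) x (d (S n) x)).

Definition eig_ode (beta : R) (lam : C) (phi phi' phi'' : R -> C) (y : R) : C :=
  ((lam * lam + lam
     - RtoC 2 * lam * RtoC (1 + beta) / RtoC (denom beta y)) * phi y
   + (RtoC 2 * lam * RtoC y + RtoC (2 * y)
      - RtoC (2 * (1 + beta) * y) / RtoC (denom beta y)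
      - RtoC (2 * (1 - beta)) / RtoC (denom beta y)) * phi' y
   + RtoC (y ^ 2 - 1) * phi'' y)%C.

(* lam is an eigenvalue of L^2_{1,beta}: the ODE has a nonzero solution in
   C^infinity[-1,1] (represented as the restriction to [-1,1] of a smooth
   function on R). *)
Definition is_eigenvalue (beta : R) (lam : C) : Prop :=
  exists (phi : R -> C) (d : nat -> R -> C),
    derivative_tower phi d /\
    (exists y, -1 <= y <= 1 /\ phi y <> 0%C) /\
    (forall y, -1 <= y <= 1 -> eig_ode beta lam phi (d 1%nat) (d 2%nat) y = 0%C).

(* Mode stability of U_{1,beta,kappa} (the linearised operator does not
   depend on kappa). *)
Definition mode_stable (beta : R) : Prop :=
  forall lam : C, is_eigenvalue beta lam ->
    Re lam < 0 \/ lam = 0%C \/ lam = 1%C.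

(* Main.v *)
Require Import Defs.
From Stdlib Require Import Reals Lra Classical.
From Coquelicot Require Import Coquelicot.
Open Scope R_scope.
Lemma lin_fst : is_linear (U:=C_R_NormedModule) (V:=R_NormedModule) (fun z : C => fst z).
Proof.
split.
- intros [a b] [c d]; reflexivity.
- intros k [a b]; reflexivity.
- exists 1; split; [lra|]. intros [a b]. rewrite <- Cmod_norm.
  change (norm (a)) with (Rabs a).
  pose proof (Rmax_Cmod (a,b)) as H1. simpl in H1. pose proof (Rmax_l (Rabs a) (Rabs b)). change (norm (fst (a,b))) with (Rabs a). lra.
Qed.
Lemma lin_snd : is_linear (U:=C_R_NormedModule) (V:=R_NormedModule) (fun z : C => snd z).
Proof.
split.
- intros [a b] [c d]; reflexivity.
- intros k [a b]; reflexivity.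
- exists 1; split; [lra|]. intros [a b]. rewrite <- Cmod_norm.
  change (norm (b)) with (Rabs b).
  pose proof (Rmax_Cmod (a,b)) as H1. simpl in H1. pose proof (Rmax_r (Rabs a) (Rabs b)). change (norm (snd (a,b))) with (Rabs b). lra.
Qed.
Lemma der_fst (f : R -> C) x l : is_derive f x l -> is_derive (fun t => fst (f t)) x (fst l).
Proof.
intros H. unfold is_derive in *.
pose proof (filterdiff_comp' f (fun z : C => fst z) x _ _ H (filterdiff_linear _ lin_fst)).
simpl in H0. 
eapply filterdiff_ext_lin. exact H0. intros y. destruct l; reflexivity.
Qed.
Lemma der_snd (f : R -> C) x l : is_derive f x l -> is_derive (fun t => snd (f t)) x (snd l).
Proof.
intros H. unfold is_derive in *.
pose proof (filterdiff_comp' f (fun z : C => snd z) x _ _ H (filterdiff_linear _ lin_snd)).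
eapply filterdiff_ext_lin. exact H0. intros y. destruct l; reflexivity.
Qed.
Lemma Dfix (f : R -> R) y l : is_derive f y l -> Derive (fun x => f x) y = l.
Proof. intros H; apply is_derive_unique; exact H. Qed.

Lemma L1 (f : R -> R) x l : is_derive f x l -> -1 <= x <= 1 ->
  (forall y, -1 <= y <= 1 -> f y = 0) -> l = 0.
Proof.
intros H Hx Hf. apply is_derive_Reals in H.
destruct (Req_dec l 0) as [|Hl]; auto. exfalso.
destruct (H (Rabs l)) as [dl Hd]. apply Rabs_pos_lt; auto.
pose (h := if Rlt_dec x 1 then Rmin (dl/2) (1 - x) else - Rmin (dl/2) 1).
assert (Hh : h <> 0 /\ Rabs h < dl /\ -1 <= x + h <= 1).
{ pose proof (cond_pos dl). unfold h; destruct (Rlt_dec x 1).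
  - pose proof (Rmin_l (dl/2) (1-x)); pose proof (Rmin_r (dl/2) (1-x)).
    assert (0 < Rmin (dl/2) (1-x)) by (apply Rmin_glb_lt; lra).
    rewrite Rabs_pos_eq; [|lra]. repeat split; lra.
  - pose proof (Rmin_l (dl/2) 1); pose proof (Rmin_r (dl/2) 1).
    assert (0 < Rmin (dl/2) 1) by (apply Rmin_glb_lt; lra).
    rewrite Rabs_Ropp, Rabs_pos_eq; [|lra]. repeat split; lra. }
destruct Hh as [h0 [h1 h2]].
specialize (Hd h h0 h1). rewrite (Hf _ h2), (Hf _ Hx) in Hd.
replace ((0 - 0) / h - l) with (- l) in Hd by (field; auto).
rewrite Rabs_Ropp in Hd. lra.
Qed.

Lemma L2 (g1 g2 g1' g2' : R -> R) m1 m2 : 0 < m1 ->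
  (forall y, is_derive g1 y (g1' y)) -> (forall y, is_derive g2 y (g2' y)) ->
  (forall y, -1 <= y <= 1 -> (1 - y) * g1' y = m1 * g1 y - m2 * g2 y /\
                             (1 - y) * g2' y = m1 * g2 y + m2 * g1 y) ->
  forall y, -1 <= y <= 1 -> g1 y = 0 /\ g2 y = 0.
Proof.
intros Hm D1 D2 E.
assert (E1 : g1 1 = 0 /\ g2 1 = 0).
{ destruct (E 1) as [e1 e2]; [lra|].
  replace (1-1) with 0 in e1, e2 by ring.
  rewrite Rmult_0_l in e1, e2.
  assert (A : (m1*m1 + m2*m2) * g1 1 = m1 * (m1 * g1 1 - m2 * g2 1) + m2 * (m1 * g2 1 + m2 * g1 1)) by ring.
  assert (B : (m1*m1 + m2*m2) * g2 1 = m1 * (m1 * g2 1 + m2 * g1 1) - m2 * (m1 * g1 1 - m2 * g2 1)) by ring.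
  rewrite <- e1, <- e2 in A, B. rewrite !Rmult_0_r, Rplus_0_r in A. rewrite !Rmult_0_r, Rminus_0_r in B.
  assert (0 < m1*m1+m2*m2) by nra.
  split; [apply (Rmult_eq_reg_l (m1*m1+m2*m2)) | apply (Rmult_eq_reg_l (m1*m1+m2*m2))]; lra. }
pose (h := fun y => g1 y * g1 y + g2 y * g2 y).
pose (h' := fun y => 2 * (g1 y * g1' y + g2 y * g2' y)).
assert (Dh : forall y, derivable_pt_lim h y (h' y)).
{ intros y. apply is_derive_Reals. unfold h, h'.
  specialize (D1 y); specialize (D2 y).
  auto_derive.
  - repeat split; eexists; eauto.
  - rewrite (Dfix _ _ _ D1), (Dfix _ _ _ D2). ring. }
intros y Hy.
destruct (Req_dec y 1) as [->|Hy1]; [exact E1|].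
destruct (MVT_cor2 h h' y 1) as [c [Hc1 Hc2]]; [lra| intros; apply Dh |].
assert (Hhc : 0 <= h' c).
{ destruct (E c) as [e1 e2]; [lra|].
  assert ((1 - c) * h' c = 2 * m1 * h c).
  { unfold h', h. transitivity (2 * (g1 c * ((1 - c) * g1' c) + g2 c * ((1 - c) * g2' c))); [ring|].
    rewrite e1, e2; ring. }
  assert (0 <= h c) by (unfold h; nra).
  assert (0 <= (1 - c) * h' c) by nra.
  destruct (Rle_or_lt 0 (h' c)); auto. nra. }
assert (h 1 = 0) by (unfold h; destruct E1 as [-> ->]; ring).
assert (h y <= 0) by nra.
unfold h in H0. split; nra.
Qed.
Definition U (d : nat -> R -> C) n y := fst (d n y).
Definition V (d : nat -> R -> C) n y := snd (d n y).
Definition PR beta d n y := INR n * (1 - beta) * U d (pred n) y + denom beta y * U d n y.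
Definition PI beta d n y := INR n * (1 - beta) * V d (pred n) y + denom beta y * V d n y.
Definition WR beta p q d k c y := (1 + y) * PR beta d (S k) y + (p + c) * PR beta d k y - q * PI beta d k y.
Definition WI beta p q d k c y := (1 + y) * PI beta d (S k) y + (p + c) * PI beta d k y + q * PR beta d k y.

Lemma dU phi d n y : derivative_tower phi d -> is_derive (U d n) y (U d (S n) y).
Proof. intros [_ H]. apply (der_fst (d n)), H. Qed.
Lemma dV phi d n y : derivative_tower phi d -> is_derive (V d n) y (V d (S n) y).
Proof. intros [_ H]. apply (der_snd (d n)), H. Qed.

Lemma dPR phi beta d n y : derivative_tower phi d -> is_derive (PR beta d n) y (PR beta d (S n) y).
Proof.
intros T. pose proof (fun m => dU phi d m y T) as H.
unfold PR, denom. destruct n as [|n]; simpl pred.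
- auto_derive. repeat split; eexists; apply H.
  rewrite !(Dfix _ _ _ (H _)). simpl. ring.
- rewrite !S_INR. auto_derive. repeat split; eexists; apply H.
  rewrite !(Dfix _ _ _ (H _)). ring.
Qed.
Lemma dPI phi beta d n y : derivative_tower phi d -> is_derive (PI beta d n) y (PI beta d (S n) y).
Proof.
intros T. pose proof (fun m => dV phi d m y T) as H.
unfold PI, denom. destruct n as [|n]; simpl pred.
- auto_derive. repeat split; eexists; apply H.
  rewrite !(Dfix _ _ _ (H _)). simpl. ring.
- rewrite !S_INR. auto_derive. repeat split; eexists; apply H.
  rewrite !(Dfix _ _ _ (H _)). ring.
Qed.
Global Opaque PR PI.
Lemma dWR phi beta p q d k c c' y : derivative_tower phi d -> c' = c + 1 ->
  is_derive (WR beta p q d k c) y (WR beta p q d (S k) c' y).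
Proof.
intros T ->. pose proof (fun m => dPR phi beta d m y T) as H.
pose proof (fun m => dPI phi beta d m y T) as H'.
unfold WR. auto_derive. repeat split; [exists (PR beta d (S (S k)) y); apply H | exists (PR beta d (S k) y); apply H | exists (PI beta d (S k) y); apply H'].
rewrite !(Dfix _ _ _ (H _)), !(Dfix _ _ _ (H' _)). ring.
Qed.
Lemma dWI phi beta p q d k c c' y : derivative_tower phi d -> c' = c + 1 ->
  is_derive (WI beta p q d k c) y (WI beta p q d (S k) c' y).
Proof.
intros T ->. pose proof (fun m => dPR phi beta d m y T) as H.
pose proof (fun m => dPI phi beta d m y T) as H'.
unfold WI. auto_derive. repeat split; [exists (PI beta d (S (S k)) y); apply H' | exists (PI beta d (S k) y); apply H' | exists (PR beta d (S k) y); apply H].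
rewrite !(Dfix _ _ _ (H _)), !(Dfix _ _ _ (H' _)). ring.
Qed.
Global Transparent PR PI.
Definition ER beta p q d y := (1 - y) * WR beta p q d 1 0 y - (p * WR beta p q d 0 (-1) y - q * WI beta p q d 0 (-1) y).
Definition EI beta p q d y := (1 - y) * WI beta p q d 1 0 y - (p * WI beta p q d 0 (-1) y + q * WR beta p q d 0 (-1) y).
Lemma alg beta p q phi d y : denom beta y <> 0 -> phi y = d 0%nat y ->
  ER beta p q d y = - denom beta y * fst (eig_ode beta (p,q) phi (d 1%nat) (d 2%nat) y) /\
  EI beta p q d y = - denom beta y * snd (eig_ode beta (p,q) phi (d 1%nat) (d 2%nat) y).
Proof.
intros HD Hp. unfold ER, EI, WR, WI, PR, PI, U, V, eig_ode. rewrite Hp. simpl.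
destruct (d 0%nat y) as [a0 b0]. destruct (d 1%nat y) as [a1 b1]. destruct (d 2%nat y) as [a2 b2].
unfold denom in *. simpl. split; field; nra.
Qed.
Global Opaque PR PI.
Lemma solve2 p q a b : 0 < p*p + q*q -> p*a - q*b = 0 -> p*b + q*a = 0 -> a = 0 /\ b = 0.
Proof.
intros H e1 e2.
assert (A : (p*p+q*q) * a = p*(p*a - q*b) + q*(p*b+q*a)) by ring.
assert (B : (p*p+q*q) * b = p*(p*b+q*a) - q*(p*a - q*b)) by ring.
rewrite e1, e2 in A, B. rewrite !Rmult_0_r, Rplus_0_r in A. rewrite !Rmult_0_r, Rminus_0_r in B.
split; [apply (Rmult_eq_reg_l (p*p+q*q)) | apply (Rmult_eq_reg_l (p*p+q*q))]; lra.
Qed.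

Lemma part1 beta (p q : R) : 0 < beta -> -1 < p -> ((p, q) : C) <> 0%C -> ((p, q) : C) <> 1%C ->
  ~ is_eigenvalue beta (p, q).
Proof.
intros hb hp h0 h1 [phi [d [T [[ys [Hys Hnz]] Hode]]]].
assert (pq0 : 0 < p*p + q*q).
{ destruct (Rlt_or_le 0 (p*p+q*q)) as [|H]; auto. exfalso; apply h0.
  assert (p = 0) by nra. assert (q = 0) by nra. subst. reflexivity. }
assert (pq1 : 0 < (p-1)*(p-1) + q*q).
{ destruct (Rlt_or_le 0 ((p-1)*(p-1)+q*q)) as [|H]; auto. exfalso; apply h1.
  assert (p = 1) by nra. assert (q = 0) by nra. subst. reflexivity. }
assert (Dpos : forall y, -1 <= y <= 1 -> 0 < denom beta y) by (intros y Hy; unfold denom; nra).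
assert (S1 : forall y, -1 <= y <= 1 -> ER beta p q d y = 0 /\ EI beta p q d y = 0).
{ intros y Hy. destruct (alg beta p q phi d y) as [e1 e2].
  - specialize (Dpos y Hy); lra.
  - destruct T as [T0 _]; rewrite T0; reflexivity.
  - rewrite e1, e2, (Hode y Hy). simpl. split; ring. }
assert (DER : forall y, is_derive (ER beta p q d) y
   (- WR beta p q d 1 0 y + (1 - y) * WR beta p q d 2 1 y - (p * WR beta p q d 1 0 y - q * WI beta p q d 1 0 y))).
{ intros y. pose proof (dWR phi beta p q d 1 0 1 y T ltac:(ring)) as A.
  pose proof (dWR phi beta p q d 0 (-1) 0 y T ltac:(ring)) as B.
  pose proof (dWI phi beta p q d 0 (-1) 0 y T ltac:(ring)) as C.
  unfold ER. auto_derive.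
  - repeat split; [exists (WR beta p q d 2 1 y); exact A | exists (WR beta p q d 1 0 y); exact B | exists (WI beta p q d 1 0 y); exact C].
  - rewrite (Dfix _ _ _ A), (Dfix _ _ _ B), (Dfix _ _ _ C). ring. }
assert (DEI : forall y, is_derive (EI beta p q d) y
   (- WI beta p q d 1 0 y + (1 - y) * WI beta p q d 2 1 y - (p * WI beta p q d 1 0 y + q * WR beta p q d 1 0 y))).
{ intros y. pose proof (dWI phi beta p q d 1 0 1 y T ltac:(ring)) as A.
  pose proof (dWI phi beta p q d 0 (-1) 0 y T ltac:(ring)) as B.
  pose proof (dWR phi beta p q d 0 (-1) 0 y T ltac:(ring)) as C.
  unfold EI. auto_derive.
  - repeat split; [exists (WI beta p q d 2 1 y); exact A | exists (WI beta p q d 1 0 y); exact B | exists (WR beta p q d 1 0 y); exact C].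
  - rewrite (Dfix _ _ _ A), (Dfix _ _ _ B), (Dfix _ _ _ C). ring. }
assert (S2 : forall y, -1 <= y <= 1 ->
  (1 - y) * WR beta p q d 2 1 y = (1 + p) * WR beta p q d 1 0 y - q * WI beta p q d 1 0 y /\
  (1 - y) * WI beta p q d 2 1 y = (1 + p) * WI beta p q d 1 0 y + q * WR beta p q d 1 0 y).
{ intros y Hy.
  pose proof (L1 _ _ _ (DER y) Hy (fun z Hz => proj1 (S1 z Hz))).
  pose proof (L1 _ _ _ (DEI y) Hy (fun z Hz => proj2 (S1 z Hz))).
  split; lra. }
assert (S3 : forall y, -1 <= y <= 1 -> WR beta p q d 1 0 y = 0 /\ WI beta p q d 1 0 y = 0).
{ apply (L2 _ _ (WR beta p q d 2 1) (WI beta p q d 2 1) (1 + p) q); [lra | | | exact S2].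
  - intros y; apply (dWR phi); [exact T | ring].
  - intros y; apply (dWI phi); [exact T | ring]. }
assert (S4 : forall y, -1 <= y <= 1 -> WR beta p q d 0 (-1) y = 0 /\ WI beta p q d 0 (-1) y = 0).
{ intros y Hy. destruct (S1 y Hy) as [e1 e2]. destruct (S3 y Hy) as [f1 f2].
  unfold ER, EI in e1, e2. rewrite f1 in e1. rewrite f2 in e2.
  apply (solve2 p q); [exact pq0 | lra | lra]. }
assert (S5 : forall y, -1 <= y <= 1 -> WR beta p q d 2 1 y = 0 /\ WI beta p q d 2 1 y = 0).
{ intros y Hy. split.
  - apply (L1 (WR beta p q d 1 0) y); [apply (dWR phi); [exact T|ring] | exact Hy | intros z Hz; apply (S3 z Hz)].
  - apply (L1 (WI beta p q d 1 0) y); [apply (dWI phi); [exact T|ring] | exact Hy | intros z Hz; apply (S3 z Hz)]. }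
assert (S6 : forall y, -1 <= y <= 1 -> PR beta d 2 y = 0 /\ PI beta d 2 y = 0).
{ assert (H6 : forall y, -1 <= y <= 1 -> PR beta d 2 (- y) = 0 /\ PI beta d 2 (- y) = 0).
  { apply (L2 _ _ (fun y => - PR beta d 3 (- y)) (fun y => - PI beta d 3 (- y)) (1 + p) q); [lra | | | ].
    - intros y. pose proof (dPR phi beta d 2 (-y) T) as A. auto_derive.
      + exists (PR beta d 3 (-y)); exact A.
      + rewrite (Dfix _ _ _ A). ring.
    - intros y. pose proof (dPI phi beta d 2 (-y) T) as A. auto_derive.
      + exists (PI beta d 3 (-y)); exact A.
      + rewrite (Dfix _ _ _ A). ring.
    - intros y Hy. destruct (S5 (-y)) as [e1 e2]; [lra|]. unfold WR, WI in e1, e2.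
      split; nra. }
  intros y Hy. rewrite <- (Ropp_involutive y). apply H6. lra. }
destruct (S6 ys Hys) as [g1 g2]. destruct (S3 ys Hys) as [f1 f2]. destruct (S4 ys Hys) as [k1 k2].
unfold WR, WI in f1, f2, k1, k2. rewrite g1 in f1; rewrite g2 in f2.
destruct (solve2 p q (PR beta d 1 ys) (PI beta d 1 ys) pq0) as [r1 r2]; [lra | lra |].
rewrite r1 in k1; rewrite r2 in k2.
destruct (solve2 (p-1) q (PR beta d 0 ys) (PI beta d 0 ys) pq1) as [s1 s2]; [lra | lra |].
Global Transparent PR PI.
unfold PR, PI, U, V in s1, s2. simpl in s1, s2.
specialize (Dpos ys Hys).
apply Hnz. destruct T as [T0 _]. rewrite <- T0. destruct (d 0%nat ys) as [a b]. simpl in s1, s2.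
assert (a = 0) by nra. assert (b = 0) by nra. subst. reflexivity.
Qed.

Theorem proposition4p2 (beta : R) (hbeta : 0 < beta) :
  (forall lam : C, -1 < Re lam -> lam <> 0%C -> lam <> 1%C ->
     ~ is_eigenvalue beta lam) /\
  (forall kappa : R, mode_stable beta).
Proof.
split.
- intros [p q] hp h0 h1. apply part1; auto.
- intros kappa lam Hl. destruct (Rlt_or_le (Re lam) 0) as [H|H]; [left; exact H|]. right.
  destruct (classic (lam = 0%C)) as [H0|H0]; [left; exact H0|].
  destruct (classic (lam = 1%C)) as [H1|H1]; [right; exact H1|].
  exfalso. destruct lam as [p q]. apply (part1 beta p q hbeta); auto. simpl in H. lra.
Qed.
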